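(* Let $(C,\mathbf A)$, $C\in\mathcal L(\mathcal X,\mathcal Y)$, $\mathbf A\in\mathcal L(\mathcal X)^d$, be an output-stable pair. Then (1) $(C,\mathbf A)$ is also $\mathbf a$-output-stable and $\mathcal G^{\mathbf a}_{C,\mathbf A}\le\mathcal G_{C,\mathbf A}$; (2) equality $\mathcal G^{\mathbf a}_{C,\mathbf A}=\mathcal G_{C,\mathbf A}$ holds if and only if $\mathbf A$ is $C$-abelian, i.e. $C\mathbf A^v=C\mathbf A^u$ whenever $u,v\in\mathcal F_d$ with $\mathbf a(u)=\mathbf a(v)$.
   Context: $\mathcal F_d$: free semigroup of words on $\{1,\dots,d\}$; $\mathbf A^v=A_{i_N}\cdots A_{i_1}$ for $v=i_N\cdots i_1$. Output-stable: $x\mapsto\{C\mathbf A^vx\}_v$ bounded into $\ell^2_{\mathcal Y}(\mathcal F_d)$; $\mathcal G_{C,\mathbf A}=\sum_v(\mathbf A^v)^*C^*C\mathbf A^v$. Abelianization $\mathbf a\colon\mathcal F_d\to\mathbb Z^d_+$: $\mathbf a(i_N\cdots i_1)=(n_1,\dots,n_d)$, $n_k=\#\{\ell:i_\ell=k\}$; $|\mathbf n|=\sum n_k$, $\mathbf n!=\prod n_k!$, $\boldsymbol\lambda^{\mathbf n}=\prod\lambda_k^{n_k}$. Arveson space $\mathcal H_{\mathcal Y}(k_d)$: power series $\sum_{\mathbf n}f_{\mathbf n}\boldsymbol\lambda^{\mathbf n}$ with $\|f\|^2=\sum_{\mathbf n}\frac{\mathbf n!}{|\mathbf n|!}\|f_{\mathbf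 n}\|^2_{\mathcal Y}<\infty$. $(C,\mathbf A)$ is $\mathbf a$-output-stable if $\widehat{\mathcal O}^{\mathbf a}_{C,\mathbf A}\colon x\mapsto\sum_{\mathbf n}\big(\sum_{v\in\mathbf a^{-1}(\mathbf n)}C\mathbf A^vx\big)\boldsymbol\lambda^{\mathbf n}$ is bounded $\mathcal X\to\mathcal H_{\mathcal Y}(k_d)$, and $\mathcal G^{\mathbf a}_{C,\mathbf A}=(\widehat{\mathcal O}^{\mathbf a}_{C,\mathbf A})^*\widehat{\mathcal O}^{\mathbf a}_{C,\mathbf A}$. *)

(* Defs.v *)
From mathcomp Require Import all_boot all_order all_algebra.
From mathcomp Require Import complex.
From mathcomp Require Import all_classical all_reals all_analysis.

Set Implicit Arguments.
Unset Strict Implicit.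
Unset Printing Implicit Defensive.

Import Order.TTheory GRing.Theory Num.Theory.
Import numFieldNormedType.Exports.
Local Open Scope ring_scope.
Local Open Scope classical_set_scope.

Section Hilbert.
Variable R : realType.

Definition hnorm (X : lmodType R[i]) (ip : X -> X -> R[i]) (x : X) : R :=
  Num.sqrt (complex.Re (ip x x)).

Record is_hilbert (X : lmodType R[i]) (ip : X -> X -> R[i]) : Prop := {
  ip_linear : forall (a : R[i]) (x y z : X), ip (a *: x + y) z = a * ip x z + ip y z;
  ip_conj : forall x y : X, ip y x = conjc (ip x y);
  ip_ge0 : forall x : X, 0 <= ip x x;
  ip_def : forall x : X, ip x x = 0 -> x = 0;
  ip_complete : forall u : nat -> X,
    (forall e : R, 0 < e -> exists N, forall m n, (N <= m)%N -> (N <= n)%N ->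
        hnorm ip (u m - u n) < e) ->
    exists l : X, forall e : R, 0 < e -> exists N, forall n, (N <= n)%N ->
        hnorm ip (u n - l) < e
}.

Definition bounded_op (X Y : lmodType R[i]) (ipX : X -> X -> R[i])
  (ipY : Y -> Y -> R[i]) (T : X -> Y) : Prop :=
  (forall (a : R[i]) (x y : X), T (a *: x + y) = a *: T x + T y) /\
  exists M : R, forall x, hnorm ipY (T x) <= M * hnorm ipX x.

Variables (X Y : lmodType R[i]) (ipX : X -> X -> R[i]) (ipY : Y -> Y -> R[i]).
Variable d : nat.

(* A word v = i_N ... i_1 of F_d is represented by the sequence
   [:: i_1; ...; i_N] (letters listed in order of application), and
   A^v x = A_{i_N} (... (A_{i_1} x)). Words of length k are k.-tuple 'I_d. *)
Definition wact (A : 'I_d -> X -> X) (w : seq 'I_d) (x : X) : X :=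
  foldl (fun y i => A i y) x w.

Definition abel (w : seq 'I_d) : {ffun 'I_d -> nat} := [ffun j => count_mem j w].

(* multi-indices n in Z_+^d with |n| = k are {ffun 'I_d -> 'I_k.+1} with
   sum k; this is the k-th homogeneous part of the Arveson space. *)
Definition mdeg (k : nat) (n : {ffun 'I_d -> 'I_k.+1}) : nat := \sum_j (n j : nat).

Definition arv_weight (k : nat) (n : {ffun 'I_d -> 'I_k.+1}) : R :=
  (\prod_j (n j)`!)%:R / (k`!)%:R.

(* coefficient of lambda^n in O^a_{C,A} x : sum over v in a^{-1}(n) of C A^v x *)
Definition acoef (C : X -> Y) (A : 'I_d -> X -> X) (k : nat)
  (n : {ffun 'I_d -> 'I_k.+1}) (x : X) : Y :=
  \sum_(w : k.-tuple 'I_d | [forall j, abel w j == n j]) C (wact A w x).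

(* partial sums (over words of length <= N) of || {C A^v x}_v ||^2_{l^2} *)
Definition out_part (C : X -> Y) (A : 'I_d -> X -> X) (N : nat) (x : X) : R :=
  \sum_(k < N.+1) \sum_(w : k.-tuple 'I_d) hnorm ipY (C (wact A w x)) ^+ 2.

(* partial sums (over |n| <= N) of || O^a x ||^2 in the Arveson space *)
Definition aout_part (C : X -> Y) (A : 'I_d -> X -> X) (N : nat) (x : X) : R :=
  \sum_(k < N.+1) \sum_(n : {ffun 'I_d -> 'I_k.+1} | mdeg n == k)
     arv_weight n * hnorm ipY (acoef C A n x) ^+ 2.

(* output-stable: x |-> {C A^v x}_v is bounded X -> l^2_Y(F_d) *)
Definition output_stable (C : X -> Y) (A : 'I_d -> X -> X) : Prop :=
  exists M : R, forall x N, out_part C A N x <= M * hnorm ipX x ^+ 2.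

(* a-output-stable: O^a_{C,A} is bounded X -> H_Y(k_d) *)
Definition a_output_stable (C : X -> Y) (A : 'I_d -> X -> X) : Prop :=
  exists M : R, forall x N, aout_part C A N x <= M * hnorm ipX x ^+ 2.

Definition gram_part (C : X -> Y) (A : 'I_d -> X -> X) (x y : X) (N : nat) : R[i] :=
  \sum_(k < N.+1) \sum_(w : k.-tuple 'I_d) ipY (C (wact A w x)) (C (wact A w y)).

Definition agram_part (C : X -> Y) (A : 'I_d -> X -> X) (x y : X) (N : nat) : R[i] :=
  \sum_(k < N.+1) \sum_(n : {ffun 'I_d -> 'I_k.+1} | mdeg n == k)
     Complex (arv_weight n) 0 * ipY (acoef C A n x) (acoef C A n y).

Definition clim (u : nat -> R[i]) : R[i] :=
  Complex (lim ((fun N => complex.Re (u N)) @ \oo))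
          (lim ((fun N => complex.Im (u N)) @ \oo)).

(* The Gramians G = O^* O, G^a = (O^a)^* O^a, given through their
   sesquilinear forms: <G x, y>_X = <O x, O y>_{l^2},
   <G^a x, y>_X = <O^a x, O^a y>_{H(k_d)}. *)
Definition gram (C : X -> Y) (A : 'I_d -> X -> X) (x y : X) : R[i] :=
  clim (gram_part C A x y).

Definition agram (C : X -> Y) (A : 'I_d -> X -> X) (x y : X) : R[i] :=
  clim (agram_part C A x y).

Definition C_abelian (C : X -> Y) (A : 'I_d -> X -> X) : Prop :=
  forall u v : seq 'I_d, abel u = abel v -> forall x, C (wact A u x) = C (wact A v x).

End Hilbert.

(* Main.v *)
Require Import Defs.
From mathcomp Require Import all_boot all_order all_algebra.
From mathcomp Require Import complex.
From mathcomp Require Import all_classical all_reals all_analysis.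
From mathcomp Require Import zify ring lra.
Import Order.TTheory GRing.Theory Num.Theory.
Set Implicit Arguments.
Unset Strict Implicit.
Unset Printing Implicit Defensive.
Local Open Scope ring_scope.

Lemma sum_tupleS (T : finType) (V : Type) (idx : V) (op : Monoid.com_law idx) k (F : seq T -> V) :
  \big[op/idx]_(w : k.+1.-tuple T) F w = \big[op/idx]_(i : T) \big[op/idx]_(w : k.-tuple T) F (i :: w).
Proof.
rewrite pair_big /=.
rewrite (reindex (fun p : T * k.-tuple T => [tuple of p.1 :: p.2])) //=.
exists (fun w : k.+1.-tuple T => (thead w, [tuple of behead w])).
  by move=> [i w] _ /=; congr pair; apply: val_inj.
move=> w _; apply: val_inj => /=; by case: w => [[|a s] //=].
Qed.

Lemma sum_tuple0 (T : finType) (V : Type) (idx : V) (op : Monoid.com_law idx) (F : seq T -> V) :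
  \big[op/idx]_(w : 0.-tuple T) F w = F [::].
Proof.
rewrite (eq_bigr (fun _ => F [::])); last by move=> w _; rewrite tuple0.
by rewrite big_const card_tuple expn0 /= Monoid.mulm1.
Qed.

Definition cnt d k (f : 'I_d -> nat) : nat :=
  (\sum_(w : k.-tuple 'I_d) [forall j, count_mem j w == f j])%N.

Lemma cntP d k (f : 'I_d -> nat) : (\sum_j f j = k ->
  cnt k f * \prod_j (f j)`! = k`!)%N.
Proof.
elim: k f => [|k IH] f Hf.
  rewrite /cnt (sum_tuple0 _ (fun s : seq 'I_d => nat_of_bool [forall j, count_mem j s == f j])).
  have f0 j : f j = 0%N.
    by apply/eqP; rewrite -leqn0 -Hf (bigD1 j) //= leq_addr.
  have -> : [forall j, count_mem j [::] == f j] by apply/forallP => j; rewrite f0.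
  by rewrite mul1n (eq_bigr (fun _ => 1%N)) ?prod_nat_const ?exp1n // => j _; rewrite f0.
have step i : ((\sum_(w : k.-tuple 'I_d) [forall j, count_mem j (i :: w) == f j])
   * \prod_j (f j)`! = f i * k`!)%N.
  have [fi0|fipos] := posnP (f i).
    rewrite big1 ?mul0n ?fi0 //; move=> w _.
    rewrite (_ : [forall j, _] = false) //; apply/negbTE/negP => /forallP/(_ i).
    by rewrite /= eqxx fi0.
  pose g j := (f j - (i == j))%N.
  rewrite (eq_bigr (fun w : k.-tuple 'I_d => nat_of_bool [forall j, count_mem j w == g j])); last first.
    move=> w _; congr nat_of_bool; apply: eq_forallb => j /=.
    rewrite /g; have [<-|ne] := eqVneq i j.
      by apply/eqP/eqP => /=; lia.
    by rewrite /= subn0.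
  have Hg : (\sum_j g j = k)%N.
    rewrite (bigD1 i) //= in Hf; rewrite (bigD1 i) //= /g.
    rewrite (eq_bigr f); last by move=> j /negbTE; rewrite eq_sym => ->; rewrite subn0.
    have E : (i == i) = true := eqxx i.
    rewrite E.
    by move: Hf; rewrite -(prednK fipos) subn1 /= addSn => -[].
  have Hp : (\prod_j (f j)`! = f i * \prod_j (g j)`!)%N.
    rewrite (bigD1 i) //= [in RHS](bigD1 i) //= /g.
    have E2 : (i == i) = true := eqxx i.
    rewrite E2 subn1 mulnA.
    congr (_ * _)%N; last first.
      by apply: eq_bigr => j /negbTE; rewrite eq_sym => ->; rewrite subn0.
    by rewrite -[in LHS](prednK fipos) factS prednK.
  by rewrite Hp mulnCA -/(cnt k g) IH // mulnC.
rewrite /cnt (sum_tupleS _ _ (fun s : seq 'I_d => nat_of_bool [forall j, count_mem j s == f j])) big_distrl /=.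
rewrite (eq_bigr _ (fun i _ => step i)) -big_distrl /= Hf.
by rewrite factS.
Qed.


Section IP.
Variables (R : realType) (Y : lmodType R[i]) (ip : Y -> Y -> R[i]).
Hypothesis hY : is_hilbert ip.

Lemma ipDl a b z : ip (a + b) z = ip a z + ip b z.
Proof. by rewrite -{1}(scale1r a) (ip_linear hY) mul1r. Qed.

Lemma ip0l z : ip 0 z = 0.
Proof. by apply: (addrI (ip 0 z)); rewrite [RHS]addr0 -ipDl addr0. Qed.

Lemma ipNl a z : ip (- a) z = - ip a z.
Proof. by rewrite -scaleN1r -(addr0 (_ *: a)) (ip_linear hY) ip0l addr0 mulN1r. Qed.

Lemma ipDr a b z : ip z (a + b) = ip z a + ip z b.
Proof. by rewrite (ip_conj hY) ipDl rmorphD /= -!(ip_conj hY). Qed.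

Lemma ipNr a z : ip z (- a) = - ip z a.
Proof. by rewrite (ip_conj hY) ipNl rmorphN /= -!(ip_conj hY). Qed.

Lemma ip_suml (T : finType) (P : pred T) (F : T -> Y) z :
  ip (\sum_(i | P i) F i) z = \sum_(i | P i) ip (F i) z.
Proof.
elim/big_rec2: _ => [|i y1 y2 _ <-]; first exact: ip0l.
by rewrite ipDl.
Qed.

Lemma ip0r z : ip z 0 = 0.
Proof. by rewrite (ip_conj hY) ip0l rmorph0. Qed.

Lemma ip_sumr (T : finType) (P : pred T) (F : T -> Y) z :
  ip z (\sum_(i | P i) F i) = \sum_(i | P i) ip z (F i).
Proof.
elim/big_rec2: _ => [|i y1 y2 _ <-]; first exact: ip0r.
by rewrite ipDr.
Qed.

Definition q a := complex.Re (ip a a).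

Lemma ip_real a : ip a a = Complex (q a) 0.
Proof.
have := ip_ge0 hY a; rewrite lecE /= => /andP[/eqP h _].
by rewrite /q; case: (ip a a) h => x y /= ->.
Qed.

Lemma q_ge0 a : 0 <= q a.
Proof. by have := ip_ge0 hY a; rewrite lecE /= => /andP[_ ->]. Qed.

Lemma q_eq0 a : q a = 0 -> a = 0.
Proof. by move=> h; apply: (ip_def hY); rewrite ip_real h. Qed.

Lemma hnorm2 a : hnorm ip a ^+ 2 = q a.
Proof. by rewrite /hnorm sqr_sqrtr // q_ge0. Qed.

Lemma Re_sum (T : finType) (P : pred T) (F : T -> R[i]) :
  complex.Re (\sum_(i | P i) F i) = \sum_(i | P i) complex.Re (F i).
Proof. by elim/big_rec2: _ => // i y1 y2 _ <-; case: (F i) => ? ?; case: y2. Qed.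

Lemma Im_sum (T : finType) (P : pred T) (F : T -> R[i]) :
  complex.Im (\sum_(i | P i) F i) = \sum_(i | P i) complex.Im (F i).
Proof. by elim/big_rec2: _ => // i y1 y2 _ <-; case: (F i) => ? ?; case: y2. Qed.

Lemma lagrange (T : finType) (P : pred T) (V : T -> Y) :
  \sum_(i | P i) \sum_(j | P j) ip (V i - V j) (V i - V j) =
  (\sum_(i | P i) ip (V i) (V i)) *+ (2 * #|P|) -
  (ip (\sum_(i | P i) V i) (\sum_(i | P i) V i)) *+ 2.
Proof.
have e i j : ip (V i - V j) (V i - V j) =
   ip (V i) (V i) + ip (V j) (V j) - ip (V i) (V j) - ip (V j) (V i).
  rewrite ipDl ipNl !ipDr !ipNr; ring.
under eq_bigr do under eq_bigr do rewrite e.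
rewrite ip_suml; under [X in _ = _ - X *+ 2]eq_bigr do rewrite ip_sumr.
under eq_bigr do rewrite !sumrB big_split /=.
rewrite !sumrB big_split /=.
have c (F : T -> R[i]) : \sum_(i | P i) \sum_(j | P j) F i = (\sum_(i | P i) F i) *+ #|P|.
  by rewrite -sumrMnl; apply: eq_bigr => i _; rewrite sumr_const.
rewrite [X in _ - _ - X]exchange_big /= [X in _ + X - _ - _]exchange_big /= !c.
by rewrite mulnC mulrnA !mulr2n; ring.
Qed.

End IP.


Lemma sum_count_mem d (s : seq 'I_d) : (\sum_j count_mem j s)%N = size s.
Proof.
elim: s => [|a s IH] /=; first by rewrite big1.
rewrite big_split /= IH (bigD1 a) //= eqxx big1 // => j /negbTE.
by rewrite eq_sym => ->.
Qed.

Definition pf d k (w : k.-tuple 'I_d) : {ffun 'I_d -> 'I_k.+1} :=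
  [ffun j => inord (count_mem j w)].

Lemma pfE d k (w : k.-tuple 'I_d) j : (pf w j : nat) = count_mem j w.
Proof.
rewrite ffunE inordK // ltnS.
have h := sum_count_mem w; rewrite size_tuple in h.
apply: (@leq_trans (\sum_j count_mem j w)%N); last by rewrite h.
by rewrite (bigD1 j) //= leq_addr.
Qed.

Lemma pf_mdeg d k (w : k.-tuple 'I_d) : mdeg (pf w) == k.
Proof.
rewrite /mdeg (eq_bigr _ (fun j _ => pfE w j)).
by rewrite sum_count_mem size_tuple.
Qed.

Lemma pf_fib d k (w : k.-tuple 'I_d) (n : {ffun 'I_d -> 'I_k.+1}) :
  (pf w == n) = [forall j, abel w j == n j].
Proof.
apply/eqP/forallP => [<- j|h].
  by rewrite ffunE pfE.
apply/ffunP => j; apply: val_inj => /=; rewrite pfE.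
by move: (h j); rewrite ffunE => /eqP.
Qed.

Lemma partition_tuples (V : nmodType) d k (G : k.-tuple 'I_d -> V) :
  \sum_(w : k.-tuple 'I_d) G w =
  \sum_(n : {ffun 'I_d -> 'I_k.+1} | mdeg n == k)
     \sum_(w : k.-tuple 'I_d | [forall j, abel w j == n j]) G w.
Proof.
rewrite (partition_big (@pf d k) (fun n => mdeg n == k)) /=; last by move=> w _; exact: pf_mdeg.
by apply: eq_bigr => n _; apply: eq_bigl => w; rewrite pf_fib.
Qed.

Definition fibP d k (n : {ffun 'I_d -> 'I_k.+1}) : pred (k.-tuple 'I_d) :=
  fun w => [forall j, abel w j == n j].

Lemma weight_card (R : realType) d k (n : {ffun 'I_d -> 'I_k.+1}) :
  mdeg n == k -> arv_weight R n * (#|fibP n|)%:R = 1.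
Proof.
move=> /eqP hn.
have hc : #|fibP n| = cnt k (fun j => n j).
  rewrite /cnt -sum1_card big_mkcond /=; apply: eq_bigr => w _.
  rewrite /fibP /in_mem /= (_ : [forall j, abel w j == n j] = [forall j, count_mem j w == n j]).
    by case: ifP.
  by apply: eq_forallb => j; rewrite ffunE.
have := cntP hn; rewrite -hc => h.
by rewrite /arv_weight mulrAC -natrM mulnC h divff // pnatr_eq0 -lt0n fact_gt0.
Qed.


Lemma ReB (R : realType) (a b : R[i]) : complex.Re (a - b) = complex.Re a - complex.Re b.
Proof. by case: a; case: b. Qed.
Lemma ReMn (R : realType) (a : R[i]) m : complex.Re (a *+ m) = complex.Re a *+ m.
Proof.
elim: m => [|m IH]; first by [].
rewrite !mulrS -IH; move: (a *+ m) => b; clear IH; by case: a; case: b.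
Qed.

Lemma alg (R : realType) (W a b : R) m : W * m%:R = 1 ->
  (a - W * b) *+ 2 = W * (a *+ (2 * m) - b *+ 2).
Proof.
move=> h; rewrite -[a *+ _]mulr_natr -[b *+ _]mulr_natr -[(_ - _) *+ _]mulr_natr natrM; move: (m%:R) h => M h.
have e : W * (a * (2%:R * M) - b * 2%:R) = (a - W * b) * 2%:R + a * 2%:R * (W * M - 1) by ring.
by rewrite e h subrr mulr0 addr0.
Qed.

Section Level.
Variables (R : realType) (X Y : lmodType R[i]) (ipY : Y -> Y -> R[i]).
Hypothesis hY : is_hilbert ipY.
Variables (d : nat) (C : X -> Y) (A : 'I_d -> X -> X).

Local Notation V k x := (fun w : k.-tuple 'I_d => C (wact A w x)).

Definition outk k x := \sum_(w : k.-tuple 'I_d) q ipY (C (wact A w x)).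
Definition aoutk k x := \sum_(n : {ffun 'I_d -> 'I_k.+1} | mdeg n == k)
   arv_weight R n * q ipY (acoef C A n x).
Definition DD k (n : {ffun 'I_d -> 'I_k.+1}) x :=
  \sum_(w | fibP n w) \sum_(w' | fibP n w') q ipY (C (wact A w x) - C (wact A w' x)).

Lemma DD_ge0 k (n : {ffun 'I_d -> 'I_k.+1}) x : 0 <= DD n x.
Proof. by apply: sumr_ge0 => w _; apply: sumr_ge0 => w' _; apply: q_ge0. Qed.

Lemma weight_ge0 k (n : {ffun 'I_d -> 'I_k.+1}) : 0 <= arv_weight R n.
Proof. by rewrite /arv_weight divr_ge0 ?ler0n. Qed.

Lemma level_id k x : (outk k x - aoutk k x) *+ 2 =
  \sum_(n : {ffun 'I_d -> 'I_k.+1} | mdeg n == k) arv_weight R n * DD n x.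
Proof.
rewrite /outk /aoutk (partition_tuples (fun w => q ipY (C (wact A w x)))).
rewrite -sumrB -sumrMnl; apply: eq_bigr => n hn.
have hW := weight_card R hn.
have hL := lagrange hY (fibP n) (V k x).
have : complex.Re (\sum_(i | fibP n i) \sum_(j | fibP n j)
     ipY (C (wact A i x) - C (wact A j x)) (C (wact A i x) - C (wact A j x))) = DD n x.
  by rewrite Re_sum; apply: eq_bigr => w _; rewrite Re_sum.
rewrite hL ReB !ReMn Re_sum => <-.
exact: alg hW.
Qed.

Lemma level_le k x : aoutk k x <= outk k x.
Proof.
rewrite -subr_ge0 -(pmulrn_lge0 _ (isT : (0 < 2)%N)) level_id.
by apply: sumr_ge0 => n _; apply: mulr_ge0; [exact: weight_ge0|exact: DD_ge0].
Qed.

Lemma level_eq k x : aoutk k x = outk k x ->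
  forall n : {ffun 'I_d -> 'I_k.+1}, mdeg n == k ->
  forall w w', fibP n w -> fibP n w' -> C (wact A w x) = C (wact A w' x).
Proof.
move=> E n hn w w' hw hw'.
have h := level_id k x; rewrite E subrr mul0rn in h.
have := psumr_eq0P (fun n _ => mulr_ge0 (weight_ge0 n) (DD_ge0 n x)) (esym h) hn.
move/eqP; rewrite mulf_eq0 => /orP[/eqP W0|/eqP D0].
  by have := weight_card R hn; rewrite W0 mul0r => /eqP; rewrite eq_sym oner_eq0.
have hge (w1 : k.-tuple 'I_d) : 0 <= \sum_(w' | fibP n w') q ipY (C (wact A w1 x) - C (wact A w' x)).
  by apply: sumr_ge0 => ? _; exact: q_ge0.
have := psumr_eq0P (fun w1 _ => hge w1) D0 hw.
move/(psumr_eq0P (fun w1 _ => q_ge0 hY _))/(_ _ hw')/(q_eq0 hY).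
by move/eqP; rewrite subr_eq0 => /eqP.
Qed.

Lemma cplx_nat m : (m%:R : R[i]) = Complex (m%:R) 0.
Proof. by rewrite -(rmorph_nat (real_complex R)). Qed.

Lemma cplx_cancel (W : R) m (z : R[i]) : W * m%:R = 1 -> Complex W 0 * (z *+ m) = z.
Proof.
move=> h; rewrite -mulr_natr mulrCA cplx_nat.
have -> : Complex W 0 * Complex m%:R 0 = real_complex R (W * m%:R) by rewrite rmorphM.
by rewrite h rmorph1 mulr1.
Qed.

Lemma level_abel k x y : C_abelian C A ->
  \sum_(n : {ffun 'I_d -> 'I_k.+1} | mdeg n == k)
     Complex (arv_weight R n) 0 * ipY (acoef C A n x) (acoef C A n y) =
  \sum_(w : k.-tuple 'I_d) ipY (C (wact A w x)) (C (wact A w y)).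
Proof.
move=> hab.
rewrite (partition_tuples (fun w => ipY (C (wact A w x)) (C (wact A w y)))).
apply: eq_bigr => n hn.
rewrite /acoef (ip_suml hY).
have hW := weight_card R hn.
rewrite (eq_bigr (fun w : k.-tuple 'I_d => ipY (C (wact A w x)) (C (wact A w y)) *+ #|fibP n|)).
  by rewrite sumrMnl cplx_cancel.
move=> w hw; rewrite (ip_sumr hY).
rewrite (eq_bigr (fun _ => ipY (C (wact A w x)) (C (wact A w y)))); first by rewrite sumr_const.
move=> w' hw'; congr ipY; apply: hab; apply/ffunP => j.
by move: (forallP hw j) (forallP hw' j) => /eqP -> /eqP ->.
Qed.

End Level.


Lemma Re_cmul (R : realType) (W : R) (z : R[i]) : complex.Re (Complex W 0 * z) = W * complex.Re z.
Proof. by case: z => a b /=; rewrite mul0r subr0. Qed.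
Lemma Im_cmul (R : realType) (W a : R) : complex.Im (Complex W 0 * Complex a 0) = 0.
Proof. by rewrite /= mulr0 mul0r addr0. Qed.

Section Main.
Variables (R : realType) (X Y : lmodType R[i]) (ipX : X -> X -> R[i]) (ipY : Y -> Y -> R[i]).
Hypothesis hY : is_hilbert ipY.
Variables (d : nat) (C : X -> Y) (A : 'I_d -> X -> X).

Lemma out_part_eq N x : out_part ipY C A N x = \sum_(k < N.+1) outk ipY C A k x.
Proof. by apply: eq_bigr => k _; apply: eq_bigr => w _; exact: hnorm2. Qed.

Lemma aout_part_eq N x : aout_part ipY C A N x = \sum_(k < N.+1) aoutk ipY C A k x.
Proof. by apply: eq_bigr => k _; apply: eq_bigr => n _; rewrite hnorm2. Qed.

Lemma Re_gram N x : complex.Re (gram_part ipY C A x x N) = \sum_(k < N.+1) outk ipY C A k x.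
Proof. by rewrite Re_sum; apply: eq_bigr => k _; rewrite Re_sum. Qed.

Lemma Im_gram N x : complex.Im (gram_part ipY C A x x N) = 0.
Proof.
rewrite Im_sum big1 // => k _; rewrite Im_sum big1 // => w _.
by rewrite (ip_real hY).
Qed.

Lemma Re_agram N x : complex.Re (agram_part ipY C A x x N) = \sum_(k < N.+1) aoutk ipY C A k x.
Proof.
by rewrite Re_sum; apply: eq_bigr => k _; rewrite Re_sum; apply: eq_bigr => n _; rewrite Re_cmul.
Qed.

Lemma Im_agram N x : complex.Im (agram_part ipY C A x x N) = 0.
Proof.
rewrite Im_sum big1 // => k _; rewrite Im_sum big1 // => n _.
by rewrite (ip_real hY) Im_cmul.
Qed.

Lemma nd_sum (u : nat -> R) : (forall k, 0 <= u k) ->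
  nondecreasing_seq (fun N => \sum_(k < N.+1) u k).
Proof.
move=> h; apply/nondecreasing_seqP => N.
by rewrite [X in _ <= X]big_ord_recr /= lerDl.
Qed.

End Main.


Unset Implicit Arguments.
Set Strict Implicit.

Theorem proposition3p8 (R : realType) (X Y : lmodType R[i])
  (ipX : X -> X -> R[i]) (ipY : Y -> Y -> R[i])
  (hX : is_hilbert ipX) (hY : is_hilbert ipY)
  (d : nat) (C : X -> Y) (A : 'I_d -> X -> X)
  (hC : bounded_op ipX ipY C) (hA : forall i, bounded_op ipX ipX (A i))
  (hst : output_stable ipX ipY C A) :
  (a_output_stable ipX ipY C A /\
     (forall x : X, agram ipY C A x x <= gram ipY C A x x))
  /\ ((forall x y : X, agram ipY C A x y = gram ipY C A x y) <-> C_abelian C A).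
Proof.
have o0 k x : 0 <= outk ipY C A k x.
  by apply: sumr_ge0 => w _; exact: q_ge0.
have a0 k x : 0 <= aoutk ipY C A k x.
  by apply: sumr_ge0 => n _; apply: mulr_ge0; [exact: weight_ge0|exact: q_ge0].
have [M hM] := hst.
pose uo x := fun N => \sum_(k < N.+1) outk ipY C A k x.
pose ua x := fun N => \sum_(k < N.+1) aoutk ipY C A k x.
have Eo x : (fun N => complex.Re (gram_part ipY C A x x N)) = uo x.
  by apply: funext => N; exact: Re_gram.
have Ea x : (fun N => complex.Re (agram_part ipY C A x x N)) = ua x.
  by apply: funext => N; exact: Re_agram.
have uao x N : ua x N <= uo x N.
  by apply: ler_sum => k _; exact: level_le.
have cvg_o x : cvgn (uo x).
  apply: nondecreasing_is_cvgn; first exact: (nd_sum (o0 ^~ x)).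
  by exists (M * hnorm ipX x ^+ 2) => _ [N _ <-]; rewrite /uo -(out_part_eq hY); exact: hM.
have cvg_a x : cvgn (ua x).
  apply: nondecreasing_is_cvgn; first exact: (nd_sum (a0 ^~ x)).
  exists (M * hnorm ipX x ^+ 2) => _ [N _ <-].
  by apply: le_trans (uao x N) _; rewrite /uo -(out_part_eq hY); exact: hM.
split.
  split.
    exists M => x N; rewrite (aout_part_eq hY); apply: le_trans (hM x N).
    by rewrite (out_part_eq hY); exact: uao.
  move=> x; rewrite lecE /agram /gram /clim /=.
  have -> : (fun N => complex.Im (gram_part ipY C A x x N)) = fun _ => 0.
    by apply: funext => N; exact: (Im_gram hY).
  have -> : (fun N => complex.Im (agram_part ipY C A x x N)) = fun _ => 0.
    by apply: funext => N; exact: (Im_agram hY).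
  rewrite eqxx /= Eo Ea.
  by apply: ler_lim => //; apply: nearW => N; exact: uao.
split.
  move=> H u v huv x.
  have E := congr1 (@complex.Re R) (H x x).
  rewrite /agram /gram /clim /= Eo Ea in E.
  have cD : cvgn (uo x - ua x) by apply: is_cvgB.
  have lD : limn (uo x - ua x) = 0 by rewrite limB // E subrr.
  have ndD : nondecreasing_seq (uo x - ua x).
    have -> : uo x - ua x = fun N => \sum_(k < N.+1) (outk ipY C A k x - aoutk ipY C A k x).
      by apply: funext => N; rewrite /= sumrB.
    by apply: (nd_sum (u := fun k => outk ipY C A k x - aoutk ipY C A k x)) => k; rewrite subr_ge0 level_le.
  have tk k : aoutk ipY C A k x = outk ipY C A k x.
    have := nondecreasing_cvgn_le ndD cD k; rewrite lD => h.
    have h' : uo x k - ua x k <= 0 := h.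
    rewrite /uo /ua -sumrB big_ord_recr /= in h'.
    apply: le_anti; rewrite level_le //= -subr_le0.
    apply: le_trans h'; rewrite lerDr; apply: sumr_ge0 => i _.
    by rewrite subr_ge0 level_le.
  have hs : size v == size u.
    have : (\sum_j abel u j = \sum_j abel v j)%N by rewrite huv.
    under eq_bigr do rewrite ffunE.
    under [X in _ = X -> _]eq_bigr do rewrite ffunE.
    by rewrite !sum_count_mem => ->.
  pose w := in_tuple u; pose w' := Tuple hs.
  have f1 : fibP (pf w) w by rewrite /fibP -pf_fib.
  have f2 : fibP (pf w) w'.
    change [forall j, abel v j == pf w j]; rewrite -huv.
    change [forall j, abel w j == pf w j]; by rewrite -pf_fib.
  exact: (level_eq hY (tk (size u)) (pf_mdeg w) f1 f2).
move=> hab x y; rewrite /agram /gram; congr clim; apply: funext => N.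
by apply: eq_bigr => k _; exact: level_abel.
Qed.
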